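(* In the two-type population dependent branching process with parameters $p\in(0,1]$, $q\in[0,1]$, let $n(t)=n_A(t)+n_B(t)$ and let $W$ be the almost sure limit of $e^{-t}n_A(t)$ (a strictly positive finite random variable). Then $e^{-t}n(t)\to W+(1-p)W/p=:W_\infty$ almost surely as $t\to\infty$. In particular, the stopping times $T_n=\inf\{t\ge0: n(t)=n\}$ satisfy $T_n-\log n\to-\log W_\infty$ almost surely as $n\to\infty$, where $W_\infty$ is a strictly positive finite random variable.
   Context: Population dependent branching process: a continuous-time Markov process started at time $0$ with two individuals, one of type $A$ and one of type $B$; individuals live forever. Let $n_A(t), n_B(t)$ be the numbers of type $A$, $B$ individuals at time $t$ ($n_A(0)=n_B(0)=1$). At time $t$, each type $A$ individual gives birth to type $A$ individuals at rate $q$ and to type $B$ individuals at rate $(1-p)(1-q)/p$; each type $B$ individual gives birth to type $A$ individuals at rate $\frac{n_A(t)}{n_B(t)}(1-q)$ and to type $B$ individuals at rate $\frac{n_A(t)}{n_B(t)}\cdot\frac{q(1-p)}{p}$. *)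

(* Defs.v *)
From HB Require Import structures.
From mathcomp Require Import all_boot all_order all_algebra.
From mathcomp Require Import all_classical all_reals all_analysis.
Set Implicit Arguments. Unset Strict Implicit. Unset Printing Implicit Defensive.
Import Order.TTheory GRing.Theory Num.Theory.
Import numFieldNormedType.Exports.
Local Open Scope classical_set_scope.
Local Open Scope ring_scope.

Section PDBP.
Variable R : realType.

Definition rate_AA (p q : R) (s : nat * nat) : R := s.1%:R * q.
Definition rate_AB (p q : R) (s : nat * nat) : R :=
  s.1%:R * ((1 - p) * (1 - q) / p).
Definition rate_BA (p q : R) (s : nat * nat) : R :=
  s.2%:R * ((s.1%:R / s.2%:R) * (1 - q)).
Definition rate_BB (p q : R) (s : nat * nat) : R :=
  s.2%:R * ((s.1%:R / s.2%:R) * (q * (1 - p) / p)).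
Definition rateA (p q : R) s := rate_AA p q s + rate_BA p q s.
Definition rate_tot (p q : R) s :=
  rate_AA p q s + rate_AB p q s + rate_BA p q s + rate_BB p q s.

Definition jump_step (p q : R) (s : nat * nat) (u : R) : nat * nat :=
  if u * rate_tot p q s < rateA p q s then (s.1.+1, s.2) else (s.1, s.2.+1).

Variables (d : measure_display) (T : measurableType d).

Fixpoint jchain (p q : R) (U : nat -> T -> R) (w : T) (k : nat) : nat * nat :=
  if k is k'.+1 then jump_step p q (jchain p q U w k') (U k' w) else (1%N, 1%N).

(** jump times: holding time in state S_k is E_k / (total rate in S_k),
    with E_k standard exponential *)
Fixpoint jtime (p q : R) (E U : nat -> T -> R) (w : T) (k : nat) : R :=
  if k is k'.+1 then
    jtime p q E U w k' + E k' w / rate_tot p q (jchain p q U w k')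
  else 0.

(** index of the current state at time t (0 if no such index, which only
    happens for t < 0 or on the null explosion event) *)
Definition jindex (p q : R) (E U : nat -> T -> R) (w : T) (t : R) : nat :=
  xget 0%N [set k | jtime p q E U w k <= t < jtime p q E U w k.+1].

Definition nA (p q : R) (E U : nat -> T -> R) (w : T) (t : R) : nat :=
  (jchain p q U w (jindex p q E U w t)).1.
Definition nB (p q : R) (E U : nat -> T -> R) (w : T) (t : R) : nat :=
  (jchain p q U w (jindex p q E U w t)).2.
Definition ntot (p q : R) (E U : nat -> T -> R) (w : T) (t : R) : nat :=
  (nA p q E U w t + nB p q E U w t)%N.

Definition Tn (p q : R) (E U : nat -> T -> R) (n : nat) (w : T) : R :=
  inf [set t : R | 0 <= t /\ ntot p q E U w t = n].

Variable P : probability T R.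

Definition mutually_independent (I : eqType) (X : I -> T -> R) : Prop :=
  (forall i, measurable_fun setT (X i)) /\
  forall (J : seq I) (B : I -> set R), uniq J -> (forall i, measurable (B i)) ->
    P (\bigcap_(i in [set` J]) (X i @^-1` B i)) =
    \big[*%E/1%E]_(i <- J) P (X i @^-1` B i).

Definition is_std_exponential (X : T -> R) : Prop :=
  forall x : R, P [set w | X w <= x] = (if 0 <= x then 1 - expR (- x) else 0)%:E.

Definition is_uniform01 (X : T -> R) : Prop :=
  forall x : R, P [set w | X w <= x] =
    (if x < 0 then 0 else if x <= 1 then x else 1)%:E.

Definition driving_noise (E U : nat -> T -> R) : Prop :=
  mutually_independent (fun i : bool * nat => if i.1 then U i.2 else E i.2) /\
  (forall k, is_std_exponential (E k)) /\ (forall k, is_uniform01 (U k)).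

End PDBP.

(* Main.v *)
Require Import Defs.
From HB Require Import structures.
From mathcomp Require Import all_boot all_order all_algebra.
From mathcomp Require Import all_classical all_reals all_analysis.
From mathcomp Require Import ring lra.
Import Order.TTheory GRing.Theory Num.Theory.
Import numFieldNormedType.Exports.
Local Open Scope classical_set_scope.
Local Open Scope ring_scope.
Set Implicit Arguments. Unset Strict Implicit. Unset Printing Implicit Defensive.

Lemma norm2p1 (R : realType) (p : R) : 0 < p -> p <= 1 -> `|2 * p - 1| <= 1.
Proof. by move=> p0 p1; rewrite ler_norml; apply/andP; split; lra. Qed.

Lemma ratio_arith (R : realType) (K e a b c : R) : 0 <= K -> 0 < e -> 2 <= e * K ->
  a <= K * (e / 2) -> b <= 1 -> c <= a -> c + b <= e * (K + 2).
Proof. move=> *; nra. Qed.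

Section Det.
Variable R : realType.
Variables (d : measure_display) (T : measurableType d).
Variables (p q : R) (E U : nat -> T -> R).
Hypothesis p0 : 0 < p.

Definition Xb (j : nat) (w : T) : bool := U j w < p.
Definition bits (w : T) (n : nat) : seq bool := mkseq (fun j => Xb j w) n.
Definition cA (w : T) (n : nat) : nat := count id (bits w n).

Lemma cA_le w n : (cA w n <= n)%N.
Proof. by rewrite /cA (leq_trans (count_size _ _)) // size_mkseq. Qed.

Lemma cAS w n : cA w n.+1 = (cA w n + Xb n w)%N.
Proof. by rewrite /cA /bits mkseqS -cats1 count_cat /= addn0. Qed.

Lemma rate_tot_eq (a b : nat) : (0 < b)%N -> rate_tot p q (a,b) = a%:R / p.
Proof.
move=> b0; have bn0 : (b%:R : R) != 0 by rewrite pnatr_eq0 -lt0n.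
rewrite /rate_tot /rate_AA /rate_AB /rate_BA /rate_BB /=.
by field; rewrite bn0 gt_eqF.
Qed.

Lemma rateA_eq (a b : nat) : (0 < b)%N -> rateA p q (a,b) = a%:R.
Proof.
move=> b0; have bn0 : (b%:R : R) != 0 by rewrite pnatr_eq0 -lt0n.
rewrite /rateA /rate_AA /rate_BA /=.
by field.
Qed.

Lemma jchainE w k : jchain p q U w k = ((cA w k).+1, (k - cA w k).+1).
Proof.
elim: k => [|k IH] /=; first by [].
rewrite IH /jump_step rate_tot_eq // rateA_eq //=.
have a0 : 0 < ((cA w k).+1%:R : R) by rewrite ltr0n.
have -> : (U k w * ((cA w k).+1%:R / p) < (cA w k).+1%:R) = (U k w < p).
  rewrite mulrA ltr_pdivrMr // mulrC ltr_pM2l //.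
rewrite cAS /Xb; have := cA_le w k.
case: (U k w < p) => /= ck.
  by rewrite addn1 subSS.
by rewrite addn0 subSn.
Qed.

Variable w : T.
Local Notation J := (jindex p q E U w).
Local Notation tau := (jtime p q E U w).

Lemma nAE t : nA p q E U w t = (cA w (J t)).+1.
Proof. by rewrite /nA jchainE. Qed.

Lemma ntotE t : ntot p q E U w t = (J t).+2.
Proof.
rewrite /ntot /nA /nB jchainE /=; have := cA_le w (J t).
move: (cA w (J t)) (J t) => a b ab.
by rewrite addSn addnS subnKC.
Qed.

Lemma J_cvg (W : R) : 0 < W ->
  (fun t : R => expR (- t) * (nA p q E U w t)%:R) @ +oo --> W ->
  J t @[t --> +oo] --> \oo.
Proof.
move=> W0 HW; apply/cvgnyPgt => N.
have W20 : 0 < W / 2 by rewrite divr_gt0.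
have h1 := (cvgrPdist_lt _ _).1 HW _ W20.
have e0 : 0 < W / 2 / N.+1%:R by rewrite divr_gt0.
have h2 := (cvgrPdist_lt _ _).1 (@cvgr_expR R) _ e0.
near=> t.
have H1 : `|W - expR (- t) * (nA p q E U w t)%:R| < W / 2 by near: t; exact: h1.
have H2 : `|0 - expR (- t)| < W / 2 / N.+1%:R by near: t; exact: h2.
rewrite sub0r normrN gtr0_norm ?expR_gt0// in H2.
have H1' : W / 2 < expR (- t) * (nA p q E U w t)%:R.
  move: H1; rewrite ltr_norml => /andP[_]; rewrite ltrBlDr -ltrBlDl.
  by have -> : W - W / 2 = W / 2 by field.
have : N.+1%:R * expR (- t) < expR (- t) * (nA p q E U w t)%:R.
  apply: lt_trans H1'; rewrite -ltr_pdivlMl ?ltr0n//.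
  by rewrite mulrC.
rewrite mulrC ltr_pM2l ?expR_gt0// ltr_nat nAE ltnS => H.
exact: leq_trans H (cA_le _ _).
Unshelve. all: by end_near.
Qed.

Definition slln_at := forall m : nat,
  \forall k \near \oo, `|(cA w k)%:R - k%:R * p| <= k%:R / m.+1%:R.

Lemma ratio_cvg : p <= 1 -> slln_at ->
  (fun k : nat => (cA w k).+1%:R / k.+2%:R) @ \oo --> p.
Proof.
move=> p1 Hs; apply/cvgrPdist_le => e e0.
have [N _ HN] := (cvgryPge _).1 (@cvgr_idn R) (2 / e).
have hN := HN N (leqnn N).
have h3 := (cvgryPge _).1 (@cvgr_idn R) (2 / e).
have hs := Hs N.
near=> k.
have Hk : `|(cA w k)%:R - k%:R * p| <= k%:R / N.+1%:R by near: k; exact: hs.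
have Hk2 : 2 / e <= k%:R by near: k; exact: h3.
set c := (cA w k)%:R in Hk *.
set K := k%:R in Hk Hk2 *.
have -> : (cA w k).+1%:R = c + 1 by rewrite -natr1.
have -> : (k.+2%:R : R) = K + 2 by rewrite -addn2 natrD.
have K0 : 0 <= K by rewrite /K ler0n.
have K2 : 0 < K + 2 by rewrite ltr_wpDl.
have -> : p - (c + 1) / (K + 2) = ((K * p - c) + (2 * p - 1)) / (K + 2).
  by field; rewrite gt_eqF.
rewrite normrM normfV (gtr0_norm K2) ler_pdivrMr //.
have h21 := norm2p1 p0 p1.
have hN1 : 2 / e <= N.+1%:R by rewrite (le_trans hN) // ler_nat.
have hinv : N.+1%:R^-1 <= e / 2.
  have : 2 <= e * N.+1%:R by rewrite -ler_pdivrMl // mulrC.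
  rewrite -div1r ler_pdivrMr ?ltr0n //; lra.
have hKe : 2 <= e * K by rewrite -ler_pdivrMl // mulrC.
apply: (le_trans (ler_normD _ _)).
rewrite distrC in Hk.
have : K / N.+1%:R <= K * (e / 2) by rewrite ler_wpM2l.
move=> HH; apply: (ratio_arith K0 e0 hKe HH h21 Hk).
Unshelve. all: by end_near.
Qed.

Lemma part1 (W : R) : p <= 1 -> slln_at -> 0 < W ->
  (fun t : R => expR (- t) * (nA p q E U w t)%:R) @ +oo --> W ->
  (fun t : R => expR (- t) * (ntot p q E U w t)%:R) @ +oo --> W + (1 - p) * W / p.
Proof.
move=> p1 Hs W0 HW.
have hr : (fun k : nat => k.+2%:R / (cA w k).+1%:R) @ \oo --> p^-1.
  have H : (fun k : nat => ((cA w k).+1%:R / k.+2%:R)^-1) @ \oo --> p^-1.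
    exact: (cvgV (lt0r_neq0 p0) (ratio_cvg p1 Hs)).
  by under eq_fun do rewrite -invf_div.
have hc := cvg_comp _ _ (J_cvg W0 HW) hr.
have H2 : (fun t : R => expR (- t) * (nA p q E U w t)%:R *
      ((J t).+2%:R / (cA w (J t)).+1%:R)) @ +oo --> W * p^-1.
  exact: (cvgM HW hc).
have -> : W + (1 - p) * W / p = W * p^-1 by field; rewrite gt_eqF.
suff -> : (fun t : R => expR (- t) * (ntot p q E U w t)%:R) = 
  (fun t : R => expR (- t) * (nA p q E U w t)%:R *
      ((J t).+2%:R / (cA w (J t)).+1%:R)) by [].
apply/funext => t.
rewrite ntotE nAE -mulrA; congr (_ * _).
by rewrite mulrC mulfVK // pnatr_eq0.
Qed.

Lemma rate_pos k : 0 < rate_tot p q (jchain p q U w k).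
Proof. by rewrite jchainE rate_tot_eq // divr_gt0 // ltr0n. Qed.

Section tau.
Hypothesis HE : forall j, 0 < E j w.

Lemma tau_ltS k : tau k < tau k.+1.
Proof. by rewrite /= ltrDl divr_gt0 // rate_pos. Qed.

Lemma tau_lt i j : (i < j)%N -> tau i < tau j.
Proof.
move=> ij; apply: (@homo_ltn R (fun k => tau k) (fun x y => x < y) _ _ i j ij).
  by move=> ? ? ?; exact: lt_trans.
exact: tau_ltS.
Qed.

Lemma tau_le i j : (i <= j)%N -> tau i <= tau j.
Proof. by rewrite leq_eqVlt => /orP[/eqP -> // | /tau_lt/ltW]. Qed.

Lemma tau_ge0 k : 0 <= tau k.
Proof. exact: (tau_le (leq0n k)). Qed.

Lemma J_spec t : J t = 0%N \/ (tau (J t) <= t < tau (J t).+1).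
Proof.
rewrite /jindex.
case: (pselect (exists k, tau k <= t < tau k.+1)) => [ex|nex].
  by right; exact: (xgetPex 0%N ex).
by left; apply: xgetPN => k Hk; apply: nex; exists k.
Qed.

Lemma J_tau k : J (tau k) = k.
Proof.
rewrite /jindex; apply: xget_unique; first by rewrite /= lexx tau_ltS.
move=> y /= /andP[h1 h2].
case: (ltngtP y k) => // yk; exfalso.
  by move: (tau_le yk); rewrite leNgt h2.
by move: (tau_lt yk); rewrite ltNge h1.
Qed.

Lemma J_le t : 0 <= t -> tau (J t) <= t.
Proof. by move=> t0; case: (J_spec t) => [-> //|/andP[]]. Qed.

Lemma Tn_eq k : Tn p q E U k.+2 w = tau k.
Proof.
rewrite /Tn.
set S := [set t | 0 <= t /\ ntot p q E U w t = k.+2].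
have Sk : S (tau k) by split; [exact: tau_ge0 | rewrite ntotE J_tau].
have lb : lbound S (tau k).
  move=> t [t0]; rewrite ntotE => -[<-]; exact: J_le.
apply/le_anti/andP; split.
  by apply: (ge_inf (ex_intro _ _ lb)).
by apply: lb_le_inf => //; exists (tau k).
Qed.

Lemma tau_cvg (W : R) : 0 < W ->
  (fun t : R => expR (- t) * (nA p q E U w t)%:R) @ +oo --> W ->
  tau k @[k --> \oo] --> +oo.
Proof.
move=> W0 HW; apply/cvgryPge => A.
case: (pselect (exists k, A <= tau k)) => [[k0 Hk0] | nex].
  exists k0 => // k /= kk0; exact: le_trans Hk0 (tau_le kk0).
exfalso.
have := (cvgnyPgt _).1 (J_cvg W0 HW) 0%N.
move=> [M [_ HM]].
have nM := ler_norm M; have nA' := ler_norm A.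
have n1 := normr_ge0 M; have n2 := normr_ge0 A.
have tM : M < `|M| + `|A| + 1 by lra.
have tA : A <= `|M| + `|A| + 1 by lra.
have := HM _ tM; set t := `|M| + `|A| + 1 => Jt.
case: (J_spec t) => [Jt0|/andP[_ h]]; first by rewrite Jt0 in Jt.
apply: nex; exists (J t).+1; exact: ltW (le_lt_trans tA h).
Qed.

Lemma part2 (W : R) : p <= 1 -> slln_at -> 0 < W ->
  (fun t : R => expR (- t) * (nA p q E U w t)%:R) @ +oo --> W ->
  (fun n : nat => Tn p q E U n w - ln n%:R) @ \oo --> - ln (W + (1 - p) * W / p).
Proof.
move=> p1 Hs W0 HW.
set Wi := W + (1 - p) * W / p.
have Wi0 : 0 < Wi.
  have -> : Wi = W / p by rewrite /Wi; field; rewrite gt_eqF.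
  by rewrite divr_gt0.
have h1 := part1 p1 Hs W0 HW.
have h2 := cvg_comp _ _ (tau_cvg W0 HW) h1.
have h3 := cvg_comp _ _ h2 (continuous_ln Wi0).
have h4 : (fun k : nat => - ln (expR (- tau k) * (ntot p q E U w (tau k))%:R))
    @ \oo --> - ln Wi.
  exact: (cvgN h3).
rewrite -(cvg_shiftn 2).
suff -> : (fun n : nat => Tn p q E U (n + 2)%N w - ln (n + 2)%N%:R) =
  (fun k : nat => - ln (expR (- tau k) * (ntot p q E U w (tau k))%:R)) by [].
apply/funext => k.
rewrite addn2 Tn_eq ntotE J_tau lnM ?posrE ?expR_gt0 ?ltr0n // expRK.
by rewrite opprD opprK.
Qed.

End tau.

End Det.


Fixpoint allbits (n : nat) : seq (seq bool) :=
  if n is n'.+1 then [seq rcons s b | s <- allbits n', b <- [:: true; false]]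
  else [:: [::]].

Lemma allbitsS n :
  allbits n.+1 = [seq rcons s b | s <- allbits n, b <- [:: true; false]].
Proof. by []. Qed.

Lemma mem_allbits n s : (s \in allbits n) = (size s == n).
Proof.
elim: n s => [|n IH] s; first by rewrite /= inE size_eq0.
rewrite allbitsS.
case/lastP: s => [|s b].
  apply/negbTE/allpairsP => -[[s' b'] [_ _ /= H]].
  by have := congr1 size H; rewrite size_rcons.
rewrite size_rcons eqSS -IH.
apply/allpairsP/idP => [[[s' b'] [/= h1 _ /rcons_inj [-> _]]] //|h].
by exists (s, b); split => //; case: b.
Qed.

Lemma uniq_allbits n : uniq (allbits n).
Proof.
elim: n => [|n IH] //.
rewrite allbitsS; apply: allpairs_uniq => //.
by move=> [s b] [s' b'] _ _ /= /rcons_inj [-> ->].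
Qed.

Section Moment.
Variable R : realType.

Definition wt (p : R) (s : seq bool) : R := \prod_(b <- s) (if b then p else 1 - p).

Definition M4 (p : R) n (c : R) :=
  \sum_(s <- allbits n) wt p s * ((count id s)%:R - c) ^+ 4.

Definition Q4 (p : R) (n c : R) :=
  let v := p * (1 - p) in let dd := n * p - c in
  n * v * (1 - 3 * v) + 3 * n * (n - 1) * v ^+ 2 + 4 * dd * n * v * (1 - 2 * p)
  + 6 * dd ^+ 2 * n * v + dd ^+ 4.

Lemma M4S p n c : M4 p n.+1 c = p * M4 p n (c - 1) + (1 - p) * M4 p n c.
Proof.
rewrite /M4 allbitsS big_allpairs_dep !mulr_sumr -big_split /=.
apply: eq_bigr => s _.
rewrite !big_cons big_nil addr0 /wt !big_rcons /=.
rewrite -!cats1 !count_cat /= !addn0 addn1 -natr1.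
ring.
Qed.

Lemma M4E p n c : M4 p n c = Q4 p n%:R c.
Proof.
elim: n c => [|n IH] c.
  by rewrite /M4 /Q4 /= big_seq1 /wt big_nil (_ : count id [::] = 0%N) //; ring.
by rewrite M4S !IH /Q4 -natr1; ring.
Qed.

End Moment.


Lemma Q4_bound (R : realType) (p n : R) : 0 <= p -> p <= 1 -> 1 <= n ->
  Q4 p n (n * p) <= 4 * n ^+ 2.
Proof.
move=> p0 p1 n1; rewrite /Q4 /= subrr.
set v := p * (1 - p).
have v0 : 0 <= v by rewrite /v mulr_ge0 // subr_ge0.
have v1 : v <= 1 by rewrite /v; nra.
have n0 : 0 <= n by lra.
have h0 : v * (1 - 3 * v) <= 1 by nra.
have h1 : n * v * (1 - 3 * v) <= n ^+ 2.
  rewrite -mulrA expr2; apply: ler_wpM2l => //. lra.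
have h3 : v ^+ 2 <= 1 by rewrite expr2; nra.
have h2 : 3 * n * (n - 1) * v ^+ 2 <= 3 * n ^+ 2.
  have : 0 <= 3 * n * (n - 1) by nra.
  move=> hh; apply: le_trans (ler_wpM2l hh h3) _; rewrite mulr1 expr2; nra.
rewrite !(mulr0, mul0r, addr0, expr0n) /=.
lra.
Qed.

Lemma tele_arith (R : realType) (c x : R) : 0 <= c -> 1 <= x ->
  2 * c - 2 * c / x + c / x ^+ 2 <= 2 * c - 2 * c / (x + 1).
Proof.
move=> c0 x1.
have x0 : x != 0 by rewrite gt_eqF // (lt_le_trans ltr01).
have x10 : x + 1 != 0 by rewrite gt_eqF // ltr_wpDl // (le_trans ler01).
rewrite -subr_ge0.
have -> : 2 * c - 2 * c / (x + 1) - (2 * c - 2 * c / x + c / x ^+ 2)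
  = c * (x - 1) / (x ^+ 2 * (x + 1)) by field; rewrite x0 x10.
apply: divr_ge0; first by rewrite mulr_ge0 // subr_ge0.
by rewrite mulr_ge0 // ?sqr_ge0 // addr_ge0 // (le_trans ler01).
Qed.

Lemma pow4_le (R : realType) (x y : R) : 0 <= y -> x ^+ 4 <= y ^+ 4 -> `|x| <= y.
Proof.
move=> y0; rewrite -[x ^+ 4]ger0_norm ?exprn_even_ge0 // normrX.
by rewrite (ler_pXn2r (isT : (0 < 4)%N)) // ?nnegrE ?normr_ge0.
Qed.

Section Prob.
Variables (R : realType) (d : measure_display) (T : measurableType d).
Variables (P : probability T R) (p : R) (E U : nat -> T -> R).
Hypotheses (p0 : 0 < p) (p1 : p <= 1) (HN : driving_noise P E U).

Ltac lrap := move: (p0) (p1) => ? ?; lra.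

Lemma mU j : measurable_fun setT (U j).
Proof. by case: HN => [[mF _] _]; exact: (mF (true, j)). Qed.

Lemma measU j (B : set R) : measurable B -> measurable (U j @^-1` B).
Proof. by move=> mB; rewrite -[U j @^-1` B]setTI; exact: (mU j measurableT mB). Qed.

Lemma set_le_itv (f : T -> R) x : [set w | f w <= x] = f @^-1` `]-oo, x]%classic.
Proof. by apply/seteqP; split => w /=; rewrite in_itv. Qed.

Lemma P_Ule j x : 0 <= x <= 1 -> P (U j @^-1` `]-oo, x]%classic) = x%:E.
Proof.
move=> /andP[x0 x1].
case: HN => _ [_ Hu]; rewrite -set_le_itv Hu.
by rewrite ltNge x0 /= x1.
Qed.

Lemma P_lt j : P (U j @^-1` `]-oo, p[%classic) = p%:E.
Proof.
set A := U j @^-1` `]-oo, p[%classic.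
have mA : measurable A by apply: measU; exact: measurable_itv.
have up : (P A <= p%:E)%E.
  rewrite -(P_Ule j (x := p)); last by rewrite (ltW p0) p1.
  apply: le_measure; rewrite ?inE; [exact: mA| apply: measU; exact: measurable_itv|].
  by move=> w; rewrite /A /= !in_itv /= => /ltW.
have lo : forall δ, 0 < δ -> δ <= p -> ((p - δ)%:E <= P A)%E.
  move=> δ δ0 δp.
  rewrite -(P_Ule j (x := p - δ)); last first.
    by apply/andP; split; lrap.
  apply: le_measure; rewrite ?inE; [apply: measU; exact: measurable_itv|exact: mA|].
  by move=> w; rewrite /A /= !in_itv /= => h; apply: (le_lt_trans h); lrap.
have PA0 : (0 <= P A)%E by [].
have fA : P A \is a fin_num by rewrite ge0_fin_numE // (le_lt_trans up) // ltry.
rewrite -(fineK fA) in up lo *; congr (_%:E).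
move: up lo; set r := fine (P A) => up lo.
rewrite lee_fin in up.
apply/le_anti; rewrite up /=; rewrite leNgt; apply/negP => rp.
have r0 : 0 <= r by rewrite -lee_fin fineK.
have := lo ((p - r) / 2); rewrite lee_fin.
move=> /(_ ltac:(lrap) ltac:(lrap)); lrap.
Qed.

Lemma P_ge j : P (U j @^-1` `[p, +oo[%classic) = (1 - p)%:E.
Proof.
have -> : U j @^-1` `[p, +oo[%classic = ~` (U j @^-1` `]-oo, p[%classic).
  apply/seteqP; split => w /=; rewrite !in_itv /= andbT.
    by rewrite leNgt => /negP.
  by move=> /negP; rewrite -leNgt.
rewrite probability_setC ?P_lt //; apply: measU; exact: measurable_itv.
Qed.

Definition Fam := fun i : bool * nat => if i.1 then U i.2 else E i.2.

Lemma measF i (B : set R) : measurable B -> measurable (Fam i @^-1` B).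
Proof.
case: HN => [[mF _] _] mB; rewrite -[Fam i @^-1` B]setTI.
by have := mF i; move=> /(_ measurableT _ mB).
Qed.

Definition Bs (s : seq bool) (i : bool * nat) : set R :=
  if nth false s i.2 then `]-oo, p[%classic else `[p, +oo[%classic.
Definition Js (s : seq bool) := [seq (true, j) | j <- iota 0 (size s)].
Definition cyl (s : seq bool) : set T := [set w | bits p U w (size s) = s].

Lemma cyl_eq s : cyl s = \bigcap_(i in [set` Js s]) (Fam i @^-1` Bs s i).
Proof.
apply/seteqP; split => w.
  rewrite /cyl /= => Hw [b j] /=; rewrite /Js => /mapP [j'].
  rewrite mem_iota add0n => /andP[_ jlt] [-> ->] /=.
  rewrite /Bs /= -Hw /bits nth_mkseq // /Xb.
  by case: ifP => h; rewrite /= in_itv /= ?andbT // leNgt h.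
move=> H; rewrite /cyl /=.
apply: (@eq_from_nth _ false); first by rewrite size_mkseq.
move=> j; rewrite size_mkseq => jlt; rewrite nth_mkseq // /Xb.
have := H (true, j); rewrite /Js.
move=> /(_ (map_f _ _)) /=; rewrite mem_iota add0n leq0n jlt => /(_ erefl).
rewrite /Bs /=; case: (nth false s j); rewrite /= in_itv /= ?andbT => h //.
by apply/negbTE; rewrite -leNgt.
Qed.

Lemma cyl_meas s : measurable (cyl s).
Proof.
rewrite cyl_eq; apply: fin_bigcap_measurable; first exact: finite_seq.
by move=> i _; apply: measF; rewrite /Bs; case: ifP => _; exact: measurable_itv.
Qed.

Lemma P_cyl s : P (cyl s) = (wt p s)%:E.
Proof.
case: HN => [[_ Hind] _].
rewrite cyl_eq Hind; last 2 first.
- by rewrite map_inj_uniq ?iota_uniq // => a b [->].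
- by move=> i; rewrite /Bs; case: ifP => _; exact: measurable_itv.
rewrite /Js big_map /=.
under eq_bigr => j _ do rewrite /Fam /= /Bs /= (fun_if (fun B => P (U j @^-1` B))) P_lt P_ge -(fun_if EFin).
rewrite prodEFin /wt (big_nth false) /index_iota subn0 //.
Qed.

Definition Dn (e : R) (n : nat) : set T :=
  [set w | (n%:R * e) ^+ 4 < ((cA p U w n)%:R - n%:R * p) ^+ 4].
Definition Gp (e : R) (n : nat) (s : seq bool) : bool :=
  (n%:R * e) ^+ 4 < ((count id s)%:R - n%:R * p) ^+ 4.
Definition Ln e n := seq.filter (Gp e n) (allbits n).

Lemma Dn_eq e n : Dn e n = \bigcup_(s in [set` Ln e n]) cyl s.
Proof.
apply/seteqP; split => w.
  move=> Hw; exists (bits p U w n).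
    by rewrite /= /Ln mem_filter mem_allbits size_mkseq eqxx andbT.
  by rewrite /cyl /= size_mkseq.
move=> [s]; rewrite /= /Ln mem_filter mem_allbits => /andP[G /eqP sn].
by rewrite /cyl /= sn => Hs; rewrite /Dn /= /cA Hs.
Qed.

Lemma Dn_meas e n : measurable (Dn e n).
Proof.
rewrite Dn_eq; apply: fin_bigcup_measurable; first exact: finite_seq.
by move=> s _; exact: cyl_meas.
Qed.

Lemma P_Dn e n : P (Dn e n) = (\sum_(s <- Ln e n) wt p s)%:E.
Proof.
rewrite Dn_eq measure_fin_bigcup //; last 3 first.
- exact: finite_seq.
- move=> i j; rewrite /= /Ln !mem_filter !mem_allbits.
  move=> /andP[_ /eqP si] /andP[_ /eqP sj] [w [/= hi hj]].
  rewrite /cyl /= in hi hj; rewrite si in hi; rewrite sj in hj.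
  by rewrite -hi -hj.
- by move=> s _; exact: cyl_meas.
rewrite -fsbig_seq; last by rewrite filter_uniq // uniq_allbits.
by rewrite (eq_bigr _ (fun s _ => P_cyl s)) sumEFin.
Qed.

Lemma wt_ge0 s : 0 <= wt p s.
Proof. by apply: prodr_ge0 => b _; case: b; lrap. Qed.

Lemma sum_L_le e n : 0 < e -> (0 < n)%N ->
  \sum_(s <- Ln e n) wt p s <= M4 p n (n%:R * p) / (n%:R * e) ^+ 4.
Proof.
move=> e0 n0.
have th0 : 0 < (n%:R * e) ^+ 4 by rewrite exprn_gt0 // mulr_gt0 // ltr0n.
rewrite /Ln big_filter /M4 mulr_suml [X in _ <= X](bigop.bigID (Gp e n)) /=.
apply: ler_wpDr.
  by apply: sumr_ge0 => s _; rewrite divr_ge0 ?(ltW th0) // mulr_ge0 ?wt_ge0 // exprn_even_ge0.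
apply: ler_sum => s G.
rewrite -mulrA ler_peMr ?wt_ge0 // ler_pdivlMr // mul1r ltW //.
Qed.

Lemma P_Dn_le e n : 0 < e -> (0 < n)%N ->
  (P (Dn e n) <= (4 / (e ^+ 4 * n%:R ^+ 2))%:E)%E.
Proof.
move=> e0 n0; rewrite P_Dn lee_fin.
apply: le_trans (sum_L_le e0 n0) _.
have nn : 1 <= (n%:R : R) by rewrite ler1n.
have hM := Q4_bound (ltW p0) p1 nn; rewrite -M4E in hM.
have th0 : 0 < (n%:R * e) ^+ 4 by rewrite exprn_gt0 // mulr_gt0 // ltr0n.
have h2 : M4 p n (n%:R * p) / (n%:R * e) ^+ 4 <= 4 * n%:R ^+ 2 / (n%:R * e) ^+ 4.
  by rewrite ler_pM2r // invr_gt0.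
apply: le_trans h2 _.
have nz : (n%:R : R) != 0 by rewrite pnatr_eq0 -lt0n.
rewrite (_ : 4 * n%:R ^+ 2 / (n%:R * e) ^+ 4 = 4 / (e ^+ 4 * n%:R ^+ 2)) //.
by field; rewrite nz gt_eqF.
Qed.

Lemma P_Dn0 e : P (Dn e 0) = 0%E.
Proof.
rewrite (_ : Dn e 0 = set0) ?measure0 //.
apply/seteqP; split => w //=.
by rewrite /Dn /= (_ : cA p U w 0 = 0%N) // !mul0r subr0 expr0n ltxx.
Qed.

Lemma psum_le e : 0 < e -> forall N,
  (\sum_(k < N.+1) P (Dn e k) <= (2 * (4 / e ^+ 4) - 2 * (4 / e ^+ 4) / N.+1%:R)%:E)%E.
Proof.
move=> e0; elim=> [|N IH].
  by rewrite big_ord_recr big_ord0 /= add0e P_Dn0 divr1 subrr.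
rewrite big_ord_recr /=.
apply: le_trans (leeD IH (P_Dn_le e0 (ltn0Sn N))) _.
rewrite -EFinD lee_fin.
set c := 4 / e ^+ 4.
have c0 : 0 <= c by rewrite divr_ge0 // exprn_ge0 // ltW.
have x1 : 1 <= (N.+1%:R : R) by rewrite ler1n.
have := tele_arith c0 x1.
have -> : (N.+2%:R : R) = N.+1%:R + 1 by rewrite -natr1.
have -> : 4 / (e ^+ 4 * N.+1%:R ^+ 2) = c / N.+1%:R ^+ 2.
  by rewrite /c invfM mulrA.
by [].
Qed.

Lemma sum_Dn_le e : 0 < e -> (\sum_(k <oo) P (Dn e k) <= (2 * (4 / e ^+ 4))%:E)%E.
Proof.
move=> e0.
have c0 : 0 <= 2 * (4 / e ^+ 4) by rewrite mulr_ge0 // divr_ge0 // exprn_ge0 // ltW.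
apply: lime_le; first exact: is_cvg_nneseries.
apply: nearW => -[|N]; first by rewrite big_geq // lee_fin.
rewrite big_mkord; apply: le_trans (psum_le e0 N) _.
by rewrite lee_fin lerBlDr lerDl divr_ge0.
Qed.

Lemma ae_notls e : 0 < e -> {ae P, forall w, ~ lim_sup_set (Dn e) w}.
Proof.
move=> e0; exists (lim_sup_set (Dn e)); split.
- rewrite /lim_sup_set; apply: bigcapT_measurable => n.
  by apply: bigcup_measurable => k _; exact: Dn_meas.
- apply: lim_sup_set_cvg0; first exact: Dn_meas.
  exact: le_lt_trans (sum_Dn_le e0) (ltry _).
- by move=> w /= /contrapT.
Qed.

Lemma slln_ae : {ae P, forall w, slln_at p U w}.
Proof.
have H : {ae P, forall w, forall m : nat, ~ lim_sup_set (Dn (m.+1%:R^-1)) w}.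
  by apply: ae_foralln => m; apply: ae_notls; rewrite invr_gt0 ltr0n.
apply: filterS H => w Hw m.
have nL := Hw m.
have [N HN0] : exists N, forall k, (N <= k)%N -> ~ Dn (m.+1%:R^-1) k w.
  apply: contrapT => nex; apply: nL => n _.
  apply: contrapT => h; apply: nex; exists n => k nk Dk; apply: h.
  by exists k.
exists N => // k /= Nk.
have := HN0 k Nk; rewrite /Dn /= => /negP; rewrite -leNgt => h4.
by apply: pow4_le h4; rewrite mulr_ge0 // invr_ge0.
Qed.

Lemma E_pos_ae : {ae P, forall w, forall j, 0 < E j w}.
Proof.
apply: ae_foralln => j.
exists (E j @^-1` `]-oo, 0]%classic); split.
- exact: (measF (false, j) (measurable_itv _)).
- case: HN => _ [He _]; rewrite -(set_le_itv (E j)); apply: eq_trans (He j 0) _.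
  by rewrite lexx oppr0 expR0 subrr.
- by move=> w /= /negP; rewrite -leNgt in_itv.
Qed.

End Prob.

Theorem lemma5p3 (R : realType) (d : measure_display) (T : measurableType d)
  (P : probability T R) (p q : R) (E U : nat -> T -> R) (W : T -> R) :
  0 < p -> p <= 1 -> 0 <= q -> q <= 1 ->
  driving_noise P E U ->
  {ae P, forall w, (fun t : R => expR (- t) * (nA p q E U w t)%:R) @ +oo --> W w} ->
  {ae P, forall w, 0 < W w} ->
  {ae P, forall w,
     (fun t : R => expR (- t) * (ntot p q E U w t)%:R) @ +oo
       --> W w + (1 - p) * W w / p} /\
  {ae P, forall w,
     (fun n : nat => Tn p q E U n w - ln n%:R) @ \oo
       --> - ln (W w + (1 - p) * W w / p)}.
Proof.
move=> p0 p1 q0 q1 HN HW HWpos.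
have HE := E_pos_ae HN.
have HS := slln_ae p0 p1 HN.
split.
  apply: filterS (filterI HS (filterI HW HWpos)) => w [HSw [HWw HWp]].
  exact: (part1 p0 p1 HSw HWp HWw).
apply: filterS (filterI HE (filterI HS (filterI HW HWpos))) => w [HEw [HSw [HWw HWp]]].
exact: (part2 p0 HEw p1 HSw HWp HWw).
Qed.
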